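(* Let $\mathbf{p}$ be a piece-wise order reversing pair on a finite alphabet $\mathcal{A}$ whose order reversing blocks consist of exactly $N_1$ $1$-blocks, $N_2$ $2$-blocks, $N_4$ $4$-blocks and $N_5$ $5$-blocks (and no blocks of other sizes). Then $$\mathrm{ARF}(\mathbf{p})=2^{N_1+2N_2+4N_4+5N_5+1}+(-1)^{N_4+N_5}\,2^{N_1+N_2+2N_4+3N_5}.$$
   Context: Let $n=\#\mathcal{A}\ge2$. A pair is $\mathbf{p}=(p_0,p_1)$ with $p_0,p_1:\mathcal{A}\to\{1,\dots,n\}$ bijections. Standard: $p_0^{-1}(1)=p_1^{-1}(n)$ and $p_1^{-1}(1)=p_0^{-1}(n)$. A standard pair is piece-wise order reversing if there are $2=k_0<\dots<k_\ell=n$ with $B_i=p_0^{-1}\{k_{i-1},\dots,k_i-1\}=p_1^{-1}\{k_{i-1},\dots,k_i-1\}$ and $p_0(b)+p_1(b)=k_{i-1}+k_i-1$ for $b\in B_i$; the $B_i$ are the order reversing blocks, and a block with $k$ letters is a $k$-block. Quadratic form: $\mathcal{Q}_{\mathbf{p}}(v)=\sum_{a\in\mathcal{A}}v_a^2+\sum_{\{a,b\}}L_{\mathbf{p}}(a,b)v_av_b\pmod 2$ for $v\in\mathbb{Z}_2^{\mathcal{A}}$, the second sum over unordered pairs of distinct letters, where $L_{\mathbf{p}}(a,b)=1$ if $(p_0(a)-p_0(b))(p_1(a)-p_1(b))<0$ and $0$ otherwise. $\mathrm{ARF}(\mathbf{p})=\#\{v\in\mathbb{Z}_2^{\mathcal{A}}:\mathcal{Q}_{\mathbf{p}}(v)=1\}$.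 *)

(* Defs.v *)
From mathcomp Require Import all_boot all_order all_algebra.
Set Implicit Arguments. Unset Strict Implicit. Unset Printing Implicit Defensive.
Import Order.TTheory GRing.Theory Num.Theory.

Definition is_bij_1n (A : finType) (p : A -> nat) : Prop :=
  injective p /\ (forall a, 1 <= p a <= #|A|)%N.

Definition is_pair (A : finType) (p0 p1 : A -> nat) : Prop :=
  is_bij_1n p0 /\ is_bij_1n p1.

Definition is_standard (A : finType) (p0 p1 : A -> nat) : Prop :=
  (forall a, (p0 a == 1%N) = (p1 a == #|A|)) /\
  (forall a, (p1 a == 1%N) = (p0 a == #|A|)).

Definition por_block (A : finType) (p0 p1 : A -> nat) (lo hi : nat) : Prop :=
  (forall b, (lo <= p0 b < hi)%N = (lo <= p1 b < hi)%N) /\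
  (forall b, (lo <= p0 b < hi)%N -> (p0 b + p1 b = lo + hi - 1)%N).

Definition por_witness (A : finType) (p0 p1 : A -> nat) (ks : seq nat) : Prop :=
  head 0%N ks = 2%N /\ last 0%N ks = #|A| /\ sorted ltn ks /\
  (forall i, (i.+1 < size ks)%N -> por_block p0 p1 (nth 0%N ks i) (nth 0%N ks i.+1)).

Definition block_sizes (ks : seq nat) : seq nat :=
  [seq (nth 0%N ks i.+1 - nth 0%N ks i)%N | i <- iota 0 (size ks).-1].

Definition Lp (A : finType) (p0 p1 : A -> nat) (a b : A) : nat :=
  if (((p0 a)%:Z - (p0 b)%:Z) * ((p1 a)%:Z - (p1 b)%:Z) < 0)%R then 1%N else 0%N.

(* Q_p(v) in Z_2, with v in Z_2^A represented by boolean vectors;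
   unordered pairs {a,b} are enumerated once via enum_rank a < enum_rank b. *)
Definition Qp (A : finType) (p0 p1 : A -> nat) (v : {ffun A -> bool}) : nat :=
  ((\sum_(a : A) (nat_of_bool (v a)) ^ 2 +
    \sum_(a : A) \sum_(b : A | (enum_rank a < enum_rank b)%N)
        Lp p0 p1 a b * v a * v b) %% 2)%N.

Definition ARF (A : finType) (p0 p1 : A -> nat) : nat :=
  #|[set v : {ffun A -> bool} | Qp p0 p1 v == 1%N]|.

(* Main.v *)
Require Import Defs.
From mathcomp Require Import all_boot all_order all_algebra zify ring.
Import Order.TTheory GRing.Theory Num.Theory.
Set Implicit Arguments. Unset Strict Implicit. Unset Printing Implicit Defensive.


Fixpoint allbits (k : nat) : seq (seq bool) :=
  if k is k'.+1 then [seq true :: t | t <- allbits k'] ++ [seq false :: t | t <- allbits k']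
  else [:: [::]].

Lemma mem_allbits k t : (t \in allbits k) = (size t == k).
Proof.
elim: k t => [|k IH] [|b t] //=.
- by case: k {IH}=> [|k]; rewrite mem_cat; apply/negP; case/orP=> /mapP [].
- have inj (b' : bool) : injective (cons b') by move=> x y [].
  have nin b' L : (b' :: t \in map (cons (~~ b')) L) = false.
    by apply/negP => /mapP [? _ []]; case: b'.
  rewrite mem_cat eqSS -IH; case: b.
  + by rewrite (mem_map (inj true)) (nin true) orbF.
  + by rewrite (mem_map (inj false)) (nin false).
Qed.

Lemma uniq_allbits k : uniq (allbits k).
Proof.
elim: k => [|k IH] //=.
rewrite cat_uniq !map_inj_uniq //; try by move=> x y [].
rewrite IH /= andbT; apply/hasPn => t /mapP [t' _ ->]; apply/negP => /mapP [? _ []].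
by [].
Qed.

Lemma sum_allbits_cat k1 k2 (F : seq bool -> int) :
  (\sum_(w <- allbits (k1 + k2)) F w = \sum_(t <- allbits k1) \sum_(u <- allbits k2) F (t ++ u))%R.
Proof.
elim: k1 F => [|k1 IH] F.
  by rewrite add0n big_cons big_nil GRing.addr0.
rewrite addSn /= !big_cat !big_map /=.
by rewrite (IH (fun w => F (true :: w))) (IH (fun w => F (false :: w))).
Qed.


Fixpoint invs (s : seq (bool * nat)) : nat :=
  if s is e :: s' then e.1 * count (fun f => f.1 && (f.2 < e.2)) s' + invs s' else 0.

Fixpoint qmid (ks : seq nat) : seq nat :=
  match ks with a :: ((b :: _) as ks') => rev (iota a (b - a)) ++ qmid ks' | _ => [::] end.

Lemma count_zip_all (P : pred nat) (t : seq bool) (q : seq nat) :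
  size t = size q -> all P q -> count (fun f => f.1 && P f.2) (zip t q) = count id t.
Proof.
elim: t q => [|b t IH] [|c q] //= [hs] /andP [hc hq].
by rewrite hc andbT IH.
Qed.

Lemma invs_rcons s p :
  invs (rcons s p) = invs s + count (fun e => e.1 && (p.1 && (p.2 < e.2))) s.
Proof.
elim: s => [|[b c] s IH] /=; first by rewrite muln0.
rewrite -cats1 count_cat /= cats1 IH.
case: b => /=; case: (p.1 && (p.2 < c)) => /=; lia.
Qed.

Lemma invs_cat_sep (b : nat) s1 s2 :
  all (fun e => e.2 < b) s1 -> all (fun f => b <= f.2) s2 ->
  invs (s1 ++ s2) = invs s1 + invs s2.
Proof.
elim: s1 => [|e s1 IH] //= /andP [he h1] h2.
rewrite IH // count_cat.
rewrite (@eq_in_count _ _ pred0 s2); first by rewrite count_pred0 addn0 addnA.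
move=> f hf /=; move/allP: h2 => /(_ f hf) h2.
by apply/negbTE; rewrite negb_and -leqNgt (leq_trans (ltnW he) h2) orbT.
Qed.

Lemma invs_dec (q : seq nat) (t : seq bool) :
  sorted (fun x y => y < x) q -> size t = size q -> invs (zip t q) = 'C(count id t, 2).
Proof.
elim: q t => [|c q IH] [|b t] //= hp [hs].
have hall : all (fun x => x < c) q.
  by apply: (order_path_min _ hp) => x y z h1 h2; apply: ltn_trans h1.
rewrite (count_zip_all (P := fun x => x < c) hs hall) IH //; last exact: path_sorted hp.
case: b => /=; last by rewrite mul0n.
by rewrite add1n binS bin1 mul1n addnC.
Qed.

Lemma sorted_last_ge a ks : sorted ltn (a :: ks) -> a <= last a ks.
Proof.
elim: ks a => [|b ks IH] a //= /andP [hab hp].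
exact: leq_trans (ltnW hab) (IH b hp).
Qed.

Lemma size_qmid ks : sorted ltn ks -> size (qmid ks) = last 0 ks - head 0 ks.
Proof.
elim: ks => [|a ks IH] //; case: ks IH => [|b ks] IH /=; first by rewrite subnn.
move=> /andP [hab hp]; rewrite size_cat size_rev size_iota IH //=.
have := sorted_last_ge hp; lia.
Qed.

Lemma qmid_bounds ks : sorted ltn ks ->
  all (fun c => head 0 ks <= c < last 0 ks) (qmid ks).
Proof.
elim: ks => [|a ks IH] //; case: ks IH => [|b ks] IH //=.
move=> /andP [hab hp]; have hl := sorted_last_ge hp.
rewrite all_cat all_rev; apply/andP; split.
  apply/allP => c; rewrite mem_iota => /andP [h1 h2]; apply/andP; split => //; lia.
apply: sub_all (IH hp) => c /= /andP [h1 h2]; apply/andP; split => //; lia.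
Qed.

Lemma qmid_nth ks p : sorted ltn ks -> head 0 ks <= p < last 0 ks ->
  exists j, [/\ j.+1 < size ks, nth 0 ks j <= p < nth 0 ks j.+1 &
     nth 0 (qmid ks) (p - head 0 ks) = nth 0 ks j + nth 0 ks j.+1 - 1 - p].
Proof.
elim: ks p => [|a ks IH] p //; case: ks IH => [|b ks] IH /=; first by lia.
move=> /andP [hab hp] /andP [hap hpl].
case: (ltnP p b) => hpb.
  exists 0; split => //=; first by rewrite hap.
  rewrite nth_cat size_rev size_iota ifT; last by lia.
  rewrite nth_rev size_iota; last by lia.
  rewrite nth_iota; lia.
have [j [hj1 hj2 hj3]] := IH p hp (ltac:(rewrite /=; lia)).
exists j.+1; split => //=.
rewrite nth_cat size_rev size_iota ifF; last by lia.
by rewrite -hj3 /=; congr nth; lia.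
Qed.


Definition hb (k : nat) : int := (\sum_(t <- allbits k) (-1) ^+ 'C(count id t, 2))%R.

Lemma hb1 : hb 1 = 2%R. Proof. by rewrite /hb unlock; vm_compute. Qed.
Lemma hb2 : hb 2 = 2%R. Proof. by rewrite /hb unlock; vm_compute. Qed.
Lemma hb4 : hb 4 = (- 4)%R. Proof. by rewrite /hb unlock; vm_compute. Qed.
Lemma hb5 : hb 5 = (- 8)%R. Proof. by rewrite /hb unlock; vm_compute. Qed.

Fixpoint bsizes (ks : seq nat) : seq nat :=
  match ks with a :: ((b :: _) as ks') => (b - a) :: bsizes ks' | _ => [::] end.

Lemma block_sizesE ks : block_sizes ks = bsizes ks.
Proof.
elim: ks => [|a ks IH] //; case: ks IH => [|b ks] IH //.
transitivity ((b - a) :: block_sizes (b :: ks)); last by rewrite IH.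
rewrite /block_sizes /= -[1]/(1 + 0) iotaDl -map_comp.
by congr (_ :: _); apply: eq_map => i /=; rewrite add1n.
Qed.

Lemma all_zip_snd (P : pred nat) (t : seq bool) q :
  all P q -> all (fun e => P e.2) (zip t q).
Proof. by elim: t q => [|b t IH] [|c q] //= /andP [-> /IH ->]. Qed.

Lemma block_sum ks : sorted ltn ks ->
  (\sum_(u <- allbits (last 0 ks - head 0 ks)) (-1) ^+ invs (zip u (qmid ks))
    = \prod_(k <- bsizes ks) hb k)%R.
Proof.
elim: ks => [|a ks IH]; first by rewrite /= big_cons !big_nil GRing.addr0 expr0.
case: ks IH => [|b ks] IH.
  by rewrite /= subnn big_cons !big_nil GRing.addr0 expr0.
move=> /= /andP [hab hp]; have hl := sorted_last_ge hp.
have -> : last b ks - a = (b - a) + (last 0 (b :: ks) - head 0 (b :: ks)) by rewrite /=; lia.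
rewrite sum_allbits_cat big_cons -(IH hp) /hb big_distrl /=.
rewrite big_seq [RHS]big_seq; apply: eq_bigr => t ht.
rewrite big_distrr /= big_seq [RHS]big_seq; apply: eq_bigr => u hu.
move: ht hu; rewrite !mem_allbits => /eqP ht /eqP hu.
rewrite zip_cat; last by rewrite size_rev size_iota.
rewrite (@invs_cat_sep b); first last.
- have := @qmid_bounds (b :: ks) hp; rewrite /= => hq.
  by apply: (@all_zip_snd (fun c => b <= c)); apply: sub_all hq => c /andP [].
- apply: (@all_zip_snd (fun c => c < b)); apply/allP => c; rewrite mem_rev mem_iota; lia.
rewrite exprD invs_dec //; last by rewrite size_rev size_iota.
by rewrite rev_sorted; apply: iota_ltn_sorted.
Qed.


Lemma prod_hb bs : all (fun k => k \in [:: 1; 2; 4; 5]) bs ->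
  (\prod_(k <- bs) hb k = (-1) ^+ (count_mem 4 bs + count_mem 5 bs) *
     2 ^+ (count_mem 1 bs + count_mem 2 bs + 2 * count_mem 4 bs + 3 * count_mem 5 bs))%R
  /\ sumn bs = count_mem 1 bs + 2 * count_mem 2 bs + 4 * count_mem 4 bs + 5 * count_mem 5 bs.
Proof.
elim: bs => [|k bs IH]; first by rewrite big_nil.
rewrite /= => /andP [hk /IH [IH1 IH2]]; rewrite big_cons IH1 IH2.
set c1 := count_mem 1 bs; set c2 := count_mem 2 bs; set c4 := count_mem 4 bs; set c5 := count_mem 5 bs.
move: hk; rewrite !inE => /or4P [] /eqP ->; do ! rewrite [_ == _]/=;
  rewrite ?hb1 ?hb2 ?hb4 ?hb5; split; try lia;
  rewrite ?add0n ?add1n ?mulnS ?addnS ?addSn !exprS; ring.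
Qed.


Lemma pointwise (n : nat) (qm : seq nat) (u : seq bool) (x y : bool) :
  1 < n -> size u = size qm -> all (fun c => 2 <= c < n) qm ->
  count id ([:: x] ++ (u ++ [:: y])) + invs (zip ([:: x] ++ (u ++ [:: y])) (n :: qm ++ [:: 1]))
  = x + (count id u + y) + (x * (count id u + y) + (invs (zip u qm) + y * count id u)).
Proof.
move=> n2 hs ha.
have hlt : all (fun c => c < n) qm by apply: sub_all ha => c /andP [].
have hgt : all (fun c => 1 < c) qm by apply: sub_all ha => c /andP [].
rewrite /= count_cat /= addn0; congr (_ + _).
rewrite zip_cat // cats1 invs_rcons -cats1 count_cat /=.
rewrite (count_zip_all (P := fun c => c < n) hs hlt).
case: y; rewrite /= ?n2 /=.
- by rewrite (count_zip_all (P := fun c => 1 < c) hs hgt) addn0 mul1n.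
- rewrite (@eq_count _ (fun e : bool * nat => e.1 && false) pred0); last by move=> e /=; rewrite andbF.
  by rewrite count_pred0 /=; lia.
Qed.

Lemma E_list ks n : sorted ltn ks -> head 0 ks = 2 -> last 0 ks = n ->
  (\sum_(w <- allbits n) (-1) ^+ (count id w + invs (zip w (n :: qmid ks ++ [:: 1])))
    = - 2 * \prod_(k <- bsizes ks) hb k)%R.
Proof.
move=> hs hh hl.
have hn2 : 2 <= n.
  move: hs hh hl; case: ks => [|a ks'] //= hs ha hl'.
  by rewrite -hl' -ha; apply: sorted_last_ge.
rewrite -block_sum // hh hl.
have hb := qmid_bounds hs; rewrite hh hl in hb.
have hsz := size_qmid hs; rewrite hh hl in hsz.
rewrite (_ : allbits n = allbits (1 + ((n - 2) + 1))); last by congr allbits; lia.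
rewrite sum_allbits_cat; under eq_bigr do rewrite sum_allbits_cat.
rewrite exchange_big big_distrr big_seq [RHS]big_seq; apply: eq_bigr => u.
rewrite mem_allbits => /eqP hu.
rewrite [allbits 1]/= !big_cons !big_nil !GRing.addr0; cbv beta.
rewrite !pointwise //; try by rewrite hu hsz.
set S := count id u; set I := invs _.
rewrite /= ?mul1n ?mul0n ?add0n ?addn0 !exprD -(signr_odd _ S).
by case: (odd S); rewrite /= ?expr0 ?expr1; ring.
Qed.


Lemma sum_count (T : Type) (r : seq T) (P : pred T) : \sum_(i <- r) (P i : nat) = count P r.
Proof. by elim: r => [|x r IH]; rewrite ?big_nil ?big_cons ?IH. Qed.

Lemma sum_cond_all (T : Type) (r : seq T) (P : pred T) (F : T -> nat) :
  all P r -> \sum_(i <- r | P i) F i = \sum_(i <- r) F i.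
Proof.
elim: r => [|x r IH] /=; first by rewrite !big_nil.
by move=> /andP [hx hr]; rewrite !big_cons hx IH.
Qed.

Lemma swap_pairs (A : finType) (k1 k2 : A -> nat) (g : A -> A -> nat) :
  (forall a b, g a b = g b a) -> injective k1 -> injective k2 ->
  \sum_a \sum_(b | k1 a < k1 b) g a b = \sum_a \sum_(b | k2 a < k2 b) g a b.
Proof.
move=> hg.
have E1 (P : A -> A -> bool) :
  \sum_a \sum_(b | P a b) g a b = \sum_a \sum_b (if P a b then g a b else 0).
  by apply: eq_bigr => a _; rewrite big_mkcond.
suff H : forall k, injective k ->
  (\sum_a \sum_(b | k a < k b) g a b).*2 = \sum_a \sum_b (if a != b then g a b else 0).
  by move=> i1 i2; apply: double_inj; rewrite !H.
move=> k ik.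
rewrite -addnn E1 [X in _ + X]exchange_big /= -big_split; apply: eq_bigr => a _.
rewrite -big_split; apply: eq_bigr => b _ /=.
rewrite (hg b a); case: (eqVneq a b) => [->|hab]; first by rewrite ltnn.
have hk : k a != k b by apply: contra hab => /eqP /ik ->.
rewrite /=; case: ltngtP => //= h; last by rewrite h eqxx in hk.
by rewrite addn0.
Qed.

Lemma sorted_pairs (A : eqType) (k c : A -> nat) (v : A -> bool) (s : seq A) :
  sorted (relpre k ltn) s ->
  \sum_(a <- s) \sum_(b <- s | k a < k b) ((c b < c a) * v a * v b)
    = invs [seq (v a, c a) | a <- s].
Proof.
elim: s => [|a s IH] /=; first by rewrite big_nil.
move=> hp.
have hall : all (relpre k ltn a) s.
  by apply: order_path_min hp => x y z /= h1 h2; apply: ltn_trans h2.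
rewrite big_cons big_cons ltnn -IH ?(path_sorted hp) //; congr (_ + _).
  rewrite sum_cond_all // count_map -sum_count big_distrr /=.
  by apply: eq_bigr => b _; case: (v a); case: (v b); case: (c b < c a); rewrite /= ?muln0 ?muln1.
rewrite big_seq [RHS]big_seq; apply: eq_bigr => a' ha'.
rewrite big_cons ifF //; apply/negbTE; rewrite -leqNgt.
by move/allP: hall => /(_ a' ha') /= /ltnW.
Qed.

Lemma ffun_sum (A : finType) (ord : seq A) (F : seq bool -> int) :
  uniq ord -> (forall a, a \in ord) ->
  (\sum_(v : {ffun A -> bool}) F (map v ord) = \sum_(w <- allbits (size ord)) F w)%R.
Proof.
move=> hu hm.
rewrite -(big_map (fun v : {ffun A -> bool} => map v ord) xpredT F).
apply: perm_big; apply: uniq_perm; rewrite ?uniq_allbits //.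
  rewrite map_inj_uniq ?index_enum_uniq // => v1 v2 /eq_in_map h.
  by apply/ffunP => a; apply: h.
move=> w; rewrite mem_allbits; apply/idP/idP.
  by case/mapP => v _ ->; rewrite size_map.
move=> /eqP hw; apply/mapP; exists [ffun a => nth false w (index a ord)].
  by rewrite mem_index_enum.
apply: (@eq_from_nth _ false); first by rewrite size_map hw.
move=> i hi.
have x0 : A by move: hi; rewrite hw; case: (ord) => [|x s] // _; exact: x.
by rewrite hw in hi; rewrite (nth_map x0) // ffunE index_uniq.
Qed.


Lemma sumn_bsizes ks : sorted ltn ks -> sumn (bsizes ks) = last 0 ks - head 0 ks.
Proof.
elim: ks => [|a ks IH] //; case: ks IH => [|b ks] IH /=; first by rewrite subnn.
move=> /andP [hab hp]; rewrite IH //=.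
have := sorted_last_ge hp; lia.
Qed.

Lemma Lp_sym (A : finType) (p0 p1 : A -> nat) a b : Lp p0 p1 a b = Lp p0 p1 b a.
Proof.
rewrite /Lp -[((p0 b)%:Z - _)%R]opprB -[((p1 b)%:Z - _)%R]opprB mulrNN //.
Qed.

Lemma Lp_lt (A : finType) (p0 p1 : A -> nat) a b :
  p0 a < p0 b -> Lp p0 p1 a b = (p1 b < p1 a).
Proof.
move=> h; rewrite /Lp nmulr_rlt0 ?subr_lt0 ?ltz_nat // subr_gt0 ltz_nat.
by case: (p1 b < p1 a).
Qed.

Unset Implicit Arguments.
Theorem lemma4p9 (A : finType) (p0 p1 : A -> nat) (ks : seq nat)
    (N1 N2 N4 N5 : nat) :
  (2 <= #|A|)%N ->
  is_pair p0 p1 ->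
  is_standard p0 p1 ->
  por_witness p0 p1 ks ->
  all (fun k => k \in [:: 1; 2; 4; 5]%N) (block_sizes ks) ->
  count_mem 1%N (block_sizes ks) = N1 ->
  count_mem 2%N (block_sizes ks) = N2 ->
  count_mem 4%N (block_sizes ks) = N4 ->
  count_mem 5%N (block_sizes ks) = N5 ->
  (((ARF p0 p1)%:Z : int) =
     2 ^+ (N1 + 2 * N2 + 4 * N4 + 5 * N5 + 1)%N
     + (-1) ^+ (N4 + N5)%N * 2 ^+ (N1 + N2 + 2 * N4 + 3 * N5)%N    )%R.
Proof.
move=> hn [[inj0 r0] [inj1 r1]] [st1 st2] [hh [hl [hs hblk]]] hall e1 e2 e4 e5.
set n := #|A| in hn st1 st2 r0 r1 hl *.
pose ord := sort (relpre p0 leq) (enum A).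
have hperm : perm_eq ord (enum A) by rewrite perm_sort perm_refl.
have hu : uniq ord by rewrite (perm_uniq hperm) enum_uniq.
have hm : forall a, a \in ord by move=> a; rewrite (perm_mem hperm) mem_enum.
have hsz : size ord = n by rewrite (perm_size hperm) /n cardE.
have hpe : perm_eq (index_enum A) ord.
  by apply: uniq_perm; rewrite ?index_enum_uniq // => a; rewrite mem_index_enum hm.
have hmap0 : map p0 ord = iota 1 n.
  apply: (irr_sorted_eq ltn_trans ltnn).
  - rewrite ltn_sorted_uniq_leq map_inj_uniq // hu /= sorted_map.
    by apply: sort_sorted => a b; apply: leq_total.
  - exact: iota_ltn_sorted.
  - apply: (uniq_min_size (s1 := map p0 ord) (s2 := iota 1 n) _ _ _).2.
    + by rewrite map_inj_uniq.
    + move=> x /mapP [a _ ->]; rewrite mem_iota; have := r0 a; lia.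
    + by rewrite size_iota size_map hsz.
have /card_gt0P [a0 _] : 0 < #|A| by rewrite -/n; lia.
have hnth : forall i, i < n -> p0 (nth a0 ord i) = i.+1.
  by move=> i hi; rewrite -(nth_map a0 0) ?hsz // hmap0 nth_iota // add1n.
have hsorted : sorted (relpre p0 ltn) ord by rewrite -sorted_map hmap0 iota_ltn_sorted.
have hQ : forall v : {ffun A -> bool}, Qp p0 p1 v =
    (count id (map v ord) + invs (zip (map v ord) (map p1 ord))) %% 2.
  move=> v; rewrite /Qp; congr (_ %% 2); congr (_ + _).
    rewrite count_map -sum_count (perm_big _ hpe); apply: eq_bigr => a _.
    by rewrite /preim /=; case: (v a).
  rewrite (swap_pairs (k2 := p0)); first last.
  - exact: inj0.
  - by move=> x y /ord_inj /enum_rank_inj.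
  - by move=> a b; rewrite Lp_sym mulnAC.
  rewrite zip_map -(@sorted_pairs A p0 p1 v ord hsorted).
  rewrite (perm_big _ hpe); apply: eq_bigr => a _.
  rewrite (perm_big _ hpe); apply: eq_bigr => b hab.
  by rewrite Lp_lt.
have hks : sorted ltn ks by [].
have hqs := size_qmid hks; rewrite hh hl in hqs.
have hq : map p1 ord = n :: qmid ks ++ [:: 1].
  apply: (@eq_from_nth _ 0).
    rewrite size_map hsz /= size_cat hqs /=. lia.
  move=> i; rewrite size_map hsz => hi.
  rewrite (nth_map a0) ?hsz //.
  have hp := hnth i hi; set b := nth a0 ord i in hp *.
  have [ei|i0] := eqVneq i 0.
    by apply/eqP; rewrite ei /= -st1 hp ei.
  have [iN|iN] := eqVneq i (n.-1).
    rewrite (_ : i = (n - 2).+1); last by lia.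
    rewrite /= nth_cat hqs ltnn subnn /=.
    by apply/eqP; rewrite st2 hp; apply/eqP; lia.
  rewrite (_ : i = (i.-1).+1); last by lia.
  rewrite /= nth_cat hqs ifT; last by lia.
  have [j [hj1 hj2 hj3]] := qmid_nth (p := i.+1) hks (ltac:(rewrite hh hl; lia)).
  rewrite hh (_ : i.+1 - 2 = i.-1) in hj3; last by lia.
  rewrite hj3.
  have [_ hb2] := hblk j hj1.
  have := hb2 b (ltac:(by rewrite hp)).
  rewrite hp; lia.
have hE : (\sum_(v : {ffun A -> bool}) (-1) ^+ (Qp p0 p1 v)
            = - 2 * \prod_(k <- bsizes ks) hb k :> int)%R.
  rewrite (eq_bigr (fun v : {ffun A -> bool} =>
     (-1) ^+ (count id (map v ord) + invs (zip (map v ord) (n :: qmid ks ++ [:: 1]))))%R); last first.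
    by move=> v _; rewrite hQ modn2 signr_odd hq.
  rewrite (@ffun_sum A ord (fun w => (-1) ^+ (count id w + invs (zip w (n :: qmid ks ++ [:: 1]))))%R hu hm).
  by rewrite hsz; apply: E_list.
have h2n : (\sum_(v : {ffun A -> bool}) (1 : int) = 2 ^+ n)%R.
  by rewrite sumr_const card_ffun card_bool -natrX.
have hARF : ((ARF p0 p1)%:Z * 2 = 2 ^+ n - \sum_(v : {ffun A -> bool}) (-1) ^+ (Qp p0 p1 v))%R.
  rewrite /ARF -sum1_card -natz natr_sum mulr_suml big_mkcond -h2n -sumrB.
  apply: eq_bigr => v _; rewrite in_set.
  have : Qp p0 p1 v < 2 by rewrite /Qp ltn_pmod.
  by case: (Qp p0 p1 v) => [|[|k]].
have [hP hS] := prod_hb hall.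
rewrite e1 e2 e4 e5 block_sizesE sumn_bsizes // hh hl in hS.
rewrite e1 e2 e4 e5 block_sizesE in hP.
rewrite hP in hE.
apply: (@mulIf _ 2) => //.
rewrite hARF hE (_ : n = (N1 + 2 * N2 + 4 * N4 + 5 * N5 + 1).+1); last by lia.
rewrite exprS; ring.
Qed.
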